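(* Consider the CDM model and a boundary or trivial equilibrium $\bm{\hat{y}}$ of its age-structured map, with adult part $\bm{\hat{x}}$ such that $\hat x_i=0$ for $i\in Z$ (a nonempty subset of $\mathcal{M}$) and $\hat x_i>0$ for $i\in\mathcal{M}\setminus Z$. Assume the principal submatrix $\bm{J}^\bullet$ of the Jacobian of the map at $\bm{\hat{y}}$ indexed by all age classes of the species in $\mathcal{M}\setminus Z$ satisfies $\rho(\bm{J}^\bullet)<1$ (e.g. guaranteed by Proposition 1's condition for the subsystem; vacuous if $Z=\mathcal{M}$). If $$\frac{\tilde\lambda_i-z_i}{z_i} < q_i^{-1}\sum_{k\in\mathcal{M}\setminus Z}A_{ik}\hat{x}_k\quad\text{for all } i\in Z$$ (the empty sum being $0$ in the trivial case $Z=\mathcal{M}$), then the Jacobian of the map at $\bm{\hat{y}}$ has spectral radius less than $1$, i.e. $\bm{\hat{y}}$ is locally asymptotically stable.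
   Context: CDM model: $m\ge1$ species $\mathcal{M}=\{1,\dots,m\}$, delays $\delta_i\in\{0,1,\dots\}$, survival probabilities $\sigma_{a\mid i}\in(0,1]$ ($a<\delta_i$), adult survival $\sigma_{\delta_i\mid i}\in(0,1)$, $z_i=1-\sigma_{\delta_i\mid i}$, fecundity $\lambda_i>0$, $\tilde\lambda_i=\lambda_i\prod_{a=0}^{\delta_i-1}\sigma_{a\mid i}$ (empty product $=1$), $\bm{A}\ge\bm{0}$ with positive diagonal, $\bm{q}>\bm{0}$. Per capita growth $G_i(\bm{x})=\lambda_i/(1+q_i^{-1}\sum_kA_{ik}x_k)$. Age-structured map $h$ on $\bm{y}=(y_{a\mid i})$, $0\le a\le\delta_i$, with adults $\bm{x}=(y_{\delta_1\mid1},\dots,y_{\delta_m\mid m})^\top$: if $\delta_i>0$, $h_{0\mid i}(\bm{y})=G_i(\bm{x})y_{\delta_i\mid i}$, $h_{a\mid i}(\bm{y})=\sigma_{a-1\mid i}y_{a-1\mid i}$ ($1\le a\le\delta_i-1$), $h_{\delta_i\mid i}(\bm{y})=\sigma_{\delta_i-1\mid i}y_{\delta_i-1\mid i}+\sigma_{\delta_i\mid i}y_{\delta_i\mid i}$; if $\delta_i=0$, $h_{0\mid i}(\bm{y})=\sigma_{0\mid i}y_{0\mid i}+G_i(\bm{x})y_{0\mid i}$. $\rho$ denotes spectral radius. *)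

(* Defs.v *)
From HB Require Import structures.
From mathcomp Require Import all_boot all_order all_algebra.
From mathcomp Require Import complex.
From mathcomp Require Import all_classical all_reals.
From mathcomp Require Import topology normedtype derive.
Set Implicit Arguments. Unset Strict Implicit. Unset Printing Implicit Defensive.
Import Order.TTheory GRing.Theory Num.Theory numFieldNormedType.Exports.
Local Open Scope ring_scope.

Definition age_idx (m : nat) (delta : 'I_m -> nat) : finType :=
  {i : 'I_m & 'I_(delta i).+1}.

Section CDM.
Variables (R : realType) (m : nat) (delta : 'I_m -> nat)
  (sigma : 'I_m -> nat -> R) (lambda : 'I_m -> R) (A : 'M[R]_m) (q : 'I_m -> R).

Definition adults (y : age_idx delta -> R) (k : 'I_m) : R :=
  y (existT _ k ord_max).

Definition Gfun (i : 'I_m) (x : 'I_m -> R) : R :=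
  lambda i / (1 + (q i)^-1 * \sum_(k < m) A i k * x k).

Definition lambda_tilde (i : 'I_m) : R := lambda i * \prod_(a < delta i) sigma i a.

Definition zrate (i : 'I_m) : R := 1 - sigma i (delta i).

Definition cdm_map (y : age_idx delta -> R) (p : age_idx delta) : R :=
  let: existT i a := p in
  let G := Gfun i (adults y) in
  if (a : nat) == 0%N then
    (if delta i == 0%N then sigma i 0 * y (existT _ i a) + G * y (existT _ i a)
     else G * y (existT _ i ord_max))
  else if (a < delta i)%N then
    sigma i (a.-1) * y (existT _ i (inord a.-1))
  else
    sigma i (a.-1) * y (existT _ i (inord a.-1))
      + sigma i (delta i) * y (existT _ i ord_max).

End CDM.

Definition partial_deriv (R : realType) (T : finType) (F : (T -> R) -> T -> R)
  (y0 : T -> R) (p r : T) : R :=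
  derive1 (fun t : R => F (fun s => y0 s + (if s == r then t else 0)) p) 0.

Definition principal_submx (R : Type) (T : finType) (S : {set T}) (f : T -> T -> R)
  : 'M[R]_#|S| := \matrix_(a, b) f (enum_val a) (enum_val b).

Definition jacobian_mx (R : realType) (T : finType) (F : (T -> R) -> T -> R) (y0 : T -> R)
  : 'M[R]_#|[set: T]| := principal_submx [set: T] (partial_deriv F y0).

Definition spectral_radius_lt1 (R : rcfType) (n : nat) (M : 'M[R]_n) : Prop :=
  forall mu : R[i], eigenvalue (map_mx (fun x : R => x%:C%C) M) mu -> `|mu| < 1.

(* Main.v *)
Require Import Defs.
From HB Require Import structures.
From mathcomp Require Import all_boot all_order all_algebra.
From mathcomp Require Import complex.
From mathcomp Require Import all_classical all_reals.
From mathcomp Require Import topology normedtype derive.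
From mathcomp Require Import ring lra.
Import Order.TTheory GRing.Theory Num.Theory numFieldNormedType.Exports.
Local Open Scope ring_scope.
Lemma derive1_const (R : realType) (f : R -> R) : (forall t, f t = f 0) -> derive1 f 0 = 0.
Proof.
move=> H; have -> : f = cst (f 0) by apply/funext => t; rewrite H.
by rewrite derive1_cst.
Qed.

Lemma derive1_aff (R : realType) (f : R -> R) (d : R) :
  (forall t, f t = f 0 + d * t) -> derive1 f 0 = d.
Proof.
move=> H.
have did : derivable (@id R) 0 1 := @derivable_id _ _ _ _.
have dc := derivable_cst (f 0) (0:R) (1:R).
have dk := derivableM (derivable_cst d (0:R) (1:R)) did.
have -> : f = (cst (f 0) + cst d * id) by apply/funext => t; rewrite H.
rewrite derive1E (deriveD dc dk) (deriveM (derivable_cst d (0:R) (1:R)) did).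
rewrite !derive_id !derive_cst.
have alg : forall x : R, x%:A = x by move=> x; rewrite -[RHS]mulr1 -mulr_algl mulr1.
rewrite alg !scale0r !add0r addr0.
by [].
Qed.

Lemma inord_pred_eq (n : nat) (a b : 'I_n.+1) : (a : nat) != 0%N ->
  (inord (a.-1) == b :> 'I_n.+1) = ((a : nat) == b.+1).
Proof.
move=> a0; rewrite -val_eqE /= inordK; last first.
  by apply: leq_ltn_trans (ltn_ord a); apply: leq_pred.
by case: (a : nat) a0 => [|x] //= _; rewrite eqSS.
Qed.

Lemma derive1_G (R : realType) (f : R -> R) (k c d e : R) : d != 0 ->
  (forall t, f t = k * t + c / (d + e * t) * t) -> derive1 f 0 = k + c / d.
Proof.
move=> d0 H.
have did : derivable (@id R) 0 1 := @derivable_id _ _ _ _.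
pose g := (cst d + (cst e * id)) : R -> R.
have dg : derivable g 0 1.
  by apply: derivableD => //; apply: derivableM.
have g0' : g 0 = d + e * 0.
by [].
have g0 : g 0 != 0 by rewrite g0' mulr0 addr0.
pose h := fun t => (g t)^-1.
have dh : derivable h 0 1 by apply: derivableV.
have dh2 := derivableM (derivable_cst c (0:R) (1:R)) dh.
have dk := derivableM (derivable_cst k (0:R) (1:R)) did.
have dm := derivableM dh2 did.
have ft : forall t, f t = (cst k * id + (cst c * h) * id) t.
 move=> t; rewrite H.
by [].
have -> : f = (cst k * id + (cst c * h) * id) by apply/funext.
rewrite derive1E deriveD //.
rewrite (deriveM (derivable_cst k (0:R) (1:R)) did).
rewrite (deriveM dh2 did).
rewrite !derive_id !derive_cst.
rewrite scale0r !addr0.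
have alg : forall x : R, x%:A = x by move=> x; rewrite -[RHS]mulr1 -mulr_algl mulr1.
rewrite !alg !scale0r addr0.
have -> : (cst c * h) 0 = c * (g 0)^-1 by [].
have -> : cst k 0 = k by [].
by rewrite g0' mulr0 addr0.
Qed.

Section J.
Variables (R : realType) (m : nat) (delta : 'I_m -> nat)
  (sigma : 'I_m -> nat -> R) (lambda : 'I_m -> R) (A : 'M[R]_m) (q : 'I_m -> R)
  (yhat : age_idx delta -> R).

Local Notation J := (partial_deriv (cdm_map sigma lambda A q) yhat).

Lemma J_other (j : 'I_m) (hj : yhat (existT _ j ord_max) = 0) (a : 'I_(delta j).+1)
  (r : age_idx delta) : projT1 r != j -> J (existT _ j a) r = 0.
Proof.
move=> rj; rewrite /partial_deriv; apply: derive1_const => t.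
have nr : forall c : 'I_(delta j).+1, (existT (fun i => 'I_(delta i).+1) j c == r) = false.
  by move=> c; apply/negbTE; apply: contra rj => /eqP <-.
rewrite /cdm_map !nr !addr0.
case: ifP => // a0; case: ifP => hd.
  have -> : a = ord_max by apply/val_inj => /=; rewrite (eqP a0) (eqP hd).
  by rewrite hj !mulr0.
by rewrite hj !mulr0.
Qed.

Lemma J_sub (j : 'I_m) (hj : yhat (existT _ j ord_max) = 0) (a b : 'I_(delta j).+1) :
  (b < delta j)%N ->
  J (existT _ j a) (existT _ j b) = if (a : nat) == b.+1 then sigma j b else 0.
Proof.
move=> bd; rewrite /partial_deriv.
have mb : (ord_max == b) = false.
  by apply/negbTE; rewrite -val_eqE /= neq_ltn bd orbT.
rewrite /cdm_map !eq_Tagged /= !mb.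
case: (boolP ((a : nat) == 0%N)) => a0.
  have d0 : (delta j == 0%N) = false by apply/negbTE; rewrite -lt0n (leq_ltn_trans _ bd).
  rewrite (eqP a0) /= d0; apply: derive1_const => t.
  by rewrite hj !addr0 !mulr0.
case: a a0 => [[|a'] ha] //= _.
have -> : (inord a' == b :> 'I_(delta j).+1) = (a' == b).
  by rewrite -val_eqE /= inordK // ltnW.
rewrite eqSS.
apply: derive1_aff => t.
case: (a'.+1 < delta j)%N => /=; case: eqP => ab; rewrite ?addr0 ?mul0r ?add0r ?mulr0 //.
- by rewrite -ab mulrDr.
- by rewrite addr0.
- by rewrite -ab mulrDr addrAC.
- by rewrite addr0.
Qed.

Lemma sum_shift (j : 'I_m) (t : R) :
  \sum_(k < m) A j k * (yhat (existT (fun i => 'I_(delta i).+1) k ord_max) +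
     (if existT (fun i => 'I_(delta i).+1) k ord_max == existT _ j ord_max then t else 0))
  = \sum_(k < m) A j k * adults yhat k + A j j * t.
Proof.
under eq_bigr do rewrite mulrDr.
rewrite big_split /=; congr (_ + _).
rewrite (bigD1 j) //= eqxx big1 ?addr0 // => k kj.
have -> : (existT (fun i => 'I_(delta i).+1) k ord_max == existT _ j ord_max) = false.
  by apply/negbTE; apply: contra kj => /eqP/(congr1 (@projT1 _ _)) /= ->.
by rewrite mulr0.
Qed.

Lemma J_max (j : 'I_m) (hj : yhat (existT _ j ord_max) = 0)
  (hden : 1 + (q j)^-1 * \sum_(k < m) A j k * adults yhat k != 0)
  (a : 'I_(delta j).+1) :
  J (existT _ j a) (existT _ j ord_max) =
  (if (a : nat) == 0%N then Gfun lambda A q j (adults yhat) else 0)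
  + (if (a : nat) == delta j then sigma j (delta j) else 0).
Proof.
rewrite /partial_deriv /cdm_map !eq_Tagged /=.
case: a => [[|a'] ha] /=.
  case: (boolP (delta j == 0%N)) => d0.
    have e : Ordinal ha = ord_max by apply/val_inj; rewrite /= (eqP d0).
    rewrite e eqxx hj.
    have -> : (0 == delta j)%N = true by rewrite eq_sym.
    have -> : sigma j (delta j) = sigma j 0 by rewrite (eqP d0).
    rewrite (@derive1_G R _ (sigma j 0) (lambda j) _ ((q j)^-1 * A j j) hden).
      by rewrite addrC.
    move=> t; rewrite /Gfun /adults sum_shift !add0r mulrDr addrA mulrA.
    by [].
  rewrite eqxx hj.
  have -> : (0 == delta j)%N = false by rewrite eq_sym (negbTE d0).
  rewrite (@derive1_G R _ 0 (lambda j) _ ((q j)^-1 * A j j) hden).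
    by rewrite add0r addr0.
  move=> t; rewrite /Gfun /adults sum_shift !add0r mulrDr addrA mulrA mul0r add0r.
  by [].
have -> : (inord a' == ord_max :> 'I_(delta j).+1) = false.
  apply/negbTE; rewrite -val_eqE /= inordK; last by rewrite ltnW.
  by rewrite neq_ltn; apply/orP; left.
rewrite eqxx hj add0r.
case: ltnP => h.
  rewrite (ltn_eqF h) addr0; apply: derive1_const => t.
  by [].
have dj : a'.+1 = delta j by apply/eqP; rewrite eqn_leq h -ltnS ha.
rewrite dj eqxx; apply: derive1_aff => t.
by rewrite !addr0 !add0r mulr0 addr0.
Qed.
End J.

Lemma leslie (C : numFieldType) (n : nat) (s : nat -> C) (G : C) (u : 'I_n.+1 -> C) (mu : C) :
  (forall b : nat, (b < n)%N -> u (inord b.+1) * s b = mu * u (inord b)) ->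
  u ord0 * G + u ord_max * s n = mu * u ord_max ->
  0 <= s n -> 0 <= G * \prod_(a < n) s a -> G * \prod_(a < n) s a < 1 - s n ->
  (exists a, u a != 0) -> `|mu| < 1.
Proof.
move=> Hb Hm sn0 GP0 GP1 [a0 ua0].
rewrite real_ltNge ?normr_real ?real1 //; apply/negP => mu1.
have mu0 : mu != 0 by apply: contraTneq mu1 => ->; rewrite normr0 ler10.
have claim : forall k, (k <= n)%N ->
    u (inord (n - k)) * mu ^+ k = (\prod_(n - k <= a < n) s a) * u ord_max.
  elim => [|k IH] kn.
    rewrite subn0 big_geq // mul1r expr0 mulr1; congr u; apply/val_inj.
    by rewrite /= inordK.
  have kn' : (k < n)%N by [].
  have bn : (n - k.+1 < n)%N by rewrite ltn_subrL; apply/andP; split => //; apply: leq_ltn_trans kn'.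
  rewrite exprS mulrA (mulrC _ mu) -Hb // subnSK //.
  by rewrite mulrAC (IH (ltnW kn)) (big_ltn bn) subnSK // mulrAC [s _ * _]mulrC.
have umax0 : u ord_max != 0.
  apply: contraNneq ua0 => um0.
  have := claim (n - a0)%N (leq_subr _ _).
  rewrite um0 mulr0 (subKn (leq_ord a0)) => /eqP; rewrite mulf_eq0 expf_eq0 (negbTE mu0) andbF orbF.
  by have -> : (inord a0 : 'I_n.+1) = a0 by apply/val_inj; rewrite /= inordK.
have key : G * \prod_(a < n) s a = mu ^+ n * (mu - s n).
  apply: (mulfI umax0).
  have := claim n (leqnn n); rewrite subnn big_mkord => c0.
  have e0 : (inord 0 : 'I_n.+1) = ord0 by apply/val_inj; rewrite /= inordK.
  rewrite e0 in c0.
  have := congr1 (fun x => x * mu ^+ n) Hm.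
  rewrite mulrDl (mulrAC (u ord0)) c0 => h.
  have -> : u ord_max * (G * \prod_(a < n) s a) = \prod_(a < n) s a * u ord_max * G by ring.
  rewrite -[\prod_(a < n) s a * u ord_max * G](addrK (u ord_max * s n * mu ^+ n)) h.
  ring.
have : `|G * \prod_(a < n) s a| < `|G * \prod_(a < n) s a|.
  rewrite {2}key [X in _ < X]normrM normrX [X in X < _]ger0_norm //.
  apply: (lt_le_trans GP1).
  apply: (le_trans _ (ler_peMl (normr_ge0 _) (exprn_ege1 n mu1))).
  apply: le_trans (lerB_dist _ _).
  by rewrite (ger0_norm sn0) lerD2r.
by rewrite ltxx.
Qed.

Local Open Scope complex_scope.

Theorem corollary1 (R : realType) (m : nat) (delta : 'I_m -> nat)
  (sigma : 'I_m -> nat -> R) (lambda : 'I_m -> R) (A : 'M[R]_m) (q : 'I_m -> R)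
  (Hm : (0 < m)%N)
  (Hsig_juv : forall i a, (a < delta i)%N -> 0 < sigma i a <= 1)
  (Hsig_ad : forall i, 0 < sigma i (delta i) < 1)
  (Hlam : forall i, 0 < lambda i)
  (HA : forall i k, 0 <= A i k) (HAdiag : forall i, 0 < A i i)
  (Hq : forall i, 0 < q i)
  (Z : {set 'I_m}) (HZ : (0 < #|Z|)%N)
  (yhat : age_idx delta -> R)
  (Hyhat_nonneg : forall p, 0 <= yhat p)
  (Hfix : cdm_map sigma lambda A q yhat = yhat)
  (HxZ : forall i, i \in Z -> adults yhat i = 0)
  (HxnZ : forall i, i \notin Z -> 0 < adults yhat i)
  (Hsub : spectral_radius_lt1
     (principal_submx [set p : age_idx delta | projT1 p \notin Z]
        (partial_deriv (cdm_map sigma lambda A q) yhat)))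
  (Hinv : forall i, i \in Z ->
     (lambda_tilde delta sigma lambda i - zrate delta sigma i) / zrate delta sigma i
       < (q i)^-1 * \sum_(k < m | k \notin Z) A i k * adults yhat k) :
  spectral_radius_lt1 (jacobian_mx (cdm_map sigma lambda A q) yhat).
Proof.
move=> mu /eigenvalueP [v hv vn0].
set J := partial_deriv (cdm_map sigma lambda A q) yhat in Hsub *.
pose vv := fun p : age_idx delta => v 0 (@enum_rank_in _ p (finset.setTfor (age_idx delta)) (finset.in_setT p) p).
have vvE : forall k, vv (enum_val k) = v 0 k.
  by move=> k; rewrite /vv; congr (v 0 _); apply: enum_valK_in.
have col : forall r, \sum_(p : age_idx delta) vv p * (J p r)%:C = mu * vv r.
  move=> r; move/rowP: (hv) => hv'.
  have := hv' (@enum_rank_in _ r (finset.setTfor (age_idx delta)) (finset.in_setT r) r).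
  rewrite /jacobian_mx /principal_submx !mxE => <-.
  rewrite [RHS](eq_bigr (fun j => vv (enum_val j) * (J (enum_val j) r)%:C)); last first.
    by move=> j _; rewrite vvE !mxE enum_rankK_in // finset.in_setT.
  rewrite -(big_enum_val (fun p => vv p * (J p r)%:C)).
  by apply: eq_bigl => p; rewrite finset.in_setT.
have Jother : forall p r, projT1 p \in Z -> projT1 r != projT1 p -> J p r = 0.
  by move=> [j a] r /= jZ rj; apply: J_other => //; exact: (HxZ j jZ).
pose S := [set p : age_idx delta | projT1 p \notin Z].
case: (boolP [exists p, (p \in S) && (vv p != 0)]) => [/existsP [p0 /andP [p0S vp0]] | hnone].
  apply: Hsub; apply/eigenvalueP.
  exists (\row_k vv (enum_val k)).
    apply/rowP => k; rewrite !mxE.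
    rewrite [LHS](eq_bigr (fun j => vv (enum_val j) * (J (enum_val j) (enum_val k))%:C)); last first.
      by move=> j _; rewrite !mxE.
    rewrite -(big_enum_val (fun p => vv p * (J p (enum_val k))%:C)).
    rewrite -col [RHS](bigID (fun p => p \in S)) /=.
    rewrite [X in _ = _ + X]big1 ?addr0 // => p pS.
    rewrite Jother ?mulr0 //.
      by move: pS; rewrite inE negbK.
    have := enum_valP k; rewrite inE => h; apply: contraNneq h => ->.
    by move: pS; rewrite inE negbK.
  apply/eqP => /rowP /(_ (enum_rank_in p0S p0)); rewrite !mxE enum_rankK_in //.
  by move/eqP: vp0.
have vS : forall p, p \in S -> vv p = 0.
  move=> p pS; apply/eqP; apply: contraNT hnone => h; apply/existsP; exists p.
  by rewrite pS.
have [k vk] : exists k, v 0 k != 0.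
  case: (pickP (fun k => v 0 k != 0)) => [k vk | h]; first by exists k.
  case/eqP: vn0; apply/rowP => k; rewrite mxE; apply/eqP.
  by move: (h k) => /negbFE.
have vp0 : vv (enum_val k) != 0 by rewrite vvE.
move: vp0; case E: (enum_val k) => [j a0] vp0.
have jZ : j \in Z.
  have : existT _ j a0 \notin S by apply: contra vp0 => /vS ->.
  by rewrite inE negbK.
have hj : yhat (existT _ j ord_max) = 0 by exact: (HxZ j jZ).
pose u := fun a : 'I_(delta j).+1 => vv (existT _ j a).
have sumE : forall F : age_idx delta -> R[i],
    \sum_p F p = \sum_(i < m) \sum_(a : 'I_(delta i).+1) F (existT _ i a).
  move=> F.
  rewrite (@sig_big_dep _ _ _ _ (fun i : 'I_m => ('I_(delta i).+1 : finType)) xpredT (fun _ _ => true) (fun i a => F (existT _ i a))) /=.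
  by apply: eq_big => [p|[i a] _] //.
have colj : forall b : 'I_(delta j).+1,
    \sum_(a : 'I_(delta j).+1) u a * (J (existT _ j a) (existT _ j b))%:C = mu * u b.
  move=> b; rewrite /u -col sumE (bigD1 j) //= [X in _ = _ + X]big1 ?addr0 //.
  move=> i ij; apply: big1 => a _.
  case: (boolP (i \in Z)) => iZ.
    by rewrite Jother ?mulr0 //= eq_sym.
  by rewrite vS ?mul0r // inE.
have Sall : \sum_(k < m) A j k * adults yhat k = \sum_(k < m | k \notin Z) A j k * adults yhat k.
  rewrite (bigID (fun k => k \in Z)) /= big1 ?add0r // => i iZ.
  by rewrite HxZ // mulr0.
have S0 : 0 <= \sum_(k < m) A j k * adults yhat k.
  by apply: sumr_ge0 => i _; apply: mulr_ge0 => //; exact: Hyhat_nonneg.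
have qS0 : 0 <= (q j)^-1 * \sum_(k < m) A j k * adults yhat k.
  by rewrite mulr_ge0 // invr_ge0 ltW.
have D0 : 0 < 1 + (q j)^-1 * \sum_(k < m) A j k * adults yhat k.
  by apply: (lt_le_trans ltr01); rewrite lerDl.
have hden : 1 + (q j)^-1 * \sum_(k < m) A j k * adults yhat k != 0 by rewrite gt_eqF.
have Pge0 : 0 <= \prod_(a < delta j) sigma j a.
  apply: prodr_ge0 => a _.
  by case/andP: (Hsig_juv j a (ltn_ord a)) => /ltW.
have z0 : 0 < 1 - sigma j (delta j) by case/andP: (Hsig_ad j) => _; rewrite subr_gt0.
have Gdef : Gfun lambda A q j (adults yhat) = lambda j / (1 + (q j)^-1 * \sum_(k < m) A j k * adults yhat k) by [].
have key : Gfun lambda A q j (adults yhat) * \prod_(a < delta j) sigma j a < 1 - sigma j (delta j).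
  have h := Hinv j jZ.
  rewrite /lambda_tilde /zrate -Sall ltr_pdivrMr // in h.
  rewrite Gdef mulrAC ltr_pdivrMr // mulrDr mulr1.
  rewrite [X in _ < _ + X]mulrC.
  by rewrite -ltrBlDl.
have Gge0 : 0 <= Gfun lambda A q j (adults yhat) * \prod_(a < delta j) sigma j a.
  by rewrite Gdef mulr_ge0 // divr_ge0 // ltW.
apply: (@leslie _ (delta j) (fun k => (sigma j k)%:C) (Gfun lambda A q j (adults yhat))%:C u mu).
- move=> b bn; have := colj (inord b).
  rewrite (eq_bigr (fun a => u a * (if (a : nat) == b.+1 then sigma j b else 0)%:C)); last first.
    move=> a _.
    by rewrite /J (@J_sub R m delta sigma lambda A q yhat j hj a (inord b)) inordK // ltnW.
  move=> <-; rewrite (bigD1 (inord b.+1)) //= inordK // eqxx big1 ?addr0 // => a ne.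
  have -> : ((a : nat) == b.+1) = false.
    apply/negbTE; apply: contraNneq ne => h; apply/eqP/val_inj; rewrite /= inordK //.
  by rewrite rmorph0 mulr0.
- have := colj ord_max.
  rewrite (eq_bigr (fun a => u a * ((if (a : nat) == 0%N then Gfun lambda A q j (adults yhat) else 0)
      + (if (a : nat) == delta j then sigma j (delta j) else 0))%:C)); last first.
    by move=> a _; rewrite /J (@J_max R m delta sigma lambda A q yhat j hj hden a).
  move=> <-.
  under eq_bigr do rewrite rmorphD mulrDr.
  rewrite big_split /=; congr (_ + _).
    rewrite (bigD1 ord0) //= ?eqxx big1 ?addr0 // => a ne.
    have -> : ((a : nat) == 0%N) = false.
      by apply/negbTE; apply: contraNneq ne => h; apply/eqP/val_inj.
    by rewrite rmorph0 mulr0.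
  rewrite (bigD1 ord_max) //= ?eqxx big1 ?addr0 // => a ne.
  have -> : ((a : nat) == delta j) = false.
    by apply/negbTE; apply: contraNneq ne => h; apply/eqP/val_inj.
  by rewrite rmorph0 mulr0.
- by rewrite lecR; case/andP: (Hsig_ad j) => /ltW.
- by rewrite -rmorph_prod -rmorphM lecR.
- rewrite -rmorph_prod -rmorphM.
  have -> : 1 - (sigma j (delta j))%:C = (1 - sigma j (delta j))%:C by rewrite rmorphB rmorph1.
  by rewrite ltcR.
- by exists a0.
Qed.
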